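(* Let $(X,d)$ be a geometrically doubling metric space, $E\subseteq X$, $m\in\mathbb{Z}$, and $0<b_0\le B_0<\infty$, $\delta\in(0,1)$ with $12B_0\delta\le b_0$. Let $\{x^k_\alpha\}_{k\in\mathbb{Z},\alpha}$ be points of $X$ satisfying: (1) for all $k\in\mathbb{Z}$: $d(x^k_\alpha,x^k_\beta)\ge b_0\delta^k$ for $\alpha\ne\beta$, and $\min_\alpha d(x,x^k_\alpha)<B_0\delta^k$ for all $x\in X$; (2) for all $k\ge m$ and both $F\in\{E,X\setminus E\}$: $\min_{\alpha: x^k_\alpha\in F} d(x,x^k_\alpha)<B_0\delta^k$ for all $x\in F$; (3) for all $k\ge m$ and both $F\in\{E,X\setminus E\}$: $\operatorname{dist}(x^k_\alpha,X\setminus F)\ge b_0\delta^k$ whenever $x^k_\alpha\in F$; (4) there is exactly one index $\alpha_0$ with $x^m_{\alpha_0}\in E$. Let $\le$ be a dyadic partial order on the index pairs (with $c_0=b_0$, $C_0=B_0$) such that whenever $k\ge m$ and $(\ell,\beta)\le(k,\alpha)$, the points $x^\ell_\beta$ and $x^k_\alpha$ lie in the same set $F\in\{E,X\setminus E\}$. For each $\alpha$ define $\bar Q^m_\alpha=\overline{\{x^\ell_\beta:(\ell,\beta)\le(m,\alpha)\}}$ and $\tilde Q^m_{\alpha_0}=X\setminus\bigcup_{\gamma\ne\alpha_0}\bar Q^m_\gamma$. Then $\tilde Q^m_{\alpha_0}\subseteq E\subseteq\bar Q^m_{\alpha_0}$.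
   Context: Notation: $\operatorname{dist}(x,A)=\inf_{a\in A}d(x,a)$; closures are taken in $X$. Given points $\{x^k_\alpha\}$ and constants $\delta\in(0,1)$, $0<c_0\le C_0$, a dyadic partial order is a partial order $\le$ on the index pairs $(k,\alpha)$ such that: (a) every $(k+1,\beta)$ satisfies $(k+1,\beta)\le(k,\alpha)$ for exactly one $\alpha$; (b) for $\ell\le k$, $(\ell,\beta)\le(k,\alpha)$ iff $\ell=k$ and $\beta=\alpha$; (c) for $\ell>k$, $(\ell,\beta)\le(k,\alpha)$ iff there exist $\eta_k=\alpha,\eta_{k+1},\dots,\eta_\ell=\beta$ with $(j+1,\eta_{j+1})\le(j,\eta_j)$ for all $j\in\{k,\dots,\ell-1\}$; (d) $d(x^{k+1}_\beta,x^k_\alpha)<\tfrac12c_0\delta^k \Rightarrow (k+1,\beta)\le(k,\alpha)\Rightarrow d(x^{k+1}_\beta,x^k_\alpha)<C_0\delta^k$. A space is geometrically doubling if there is $A_1\in\mathbb{N}$ such that every open ball $B(x,r)=\{y:d(x,y)<r\}$ can be covered by at most $A_1$ open balls of radius $r/2$. *)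

(* Defs.v *)
From Stdlib Require Import Reals ZArith List.
Open Scope R_scope.

Definition is_metric {X : Type} (d : X -> X -> R) : Prop :=
  (forall x y, 0 <= d x y) /\
  (forall x y, d x y = 0 <-> x = y) /\
  (forall x y, d x y = d y x) /\
  (forall x y z, d x z <= d x y + d y z).

Definition ball {X : Type} (d : X -> X -> R) (x : X) (r : R) (y : X) : Prop :=
  d x y < r.

Definition geom_doubling {X : Type} (d : X -> X -> R) : Prop :=
  exists A1 : nat, forall (x : X) (r : R),
    exists cs : list X, (length cs <= A1)%nat /\
      forall y, ball d x r y -> exists c, In c cs /\ ball d c (r / 2) y.

Definition closure {X : Type} (d : X -> X -> R) (S : X -> Prop) (y : X) : Prop :=
  forall eps, 0 < eps -> exists z, S z /\ d y z < eps.

(* Chains as in clause (c): a chain from (k,a) to (l,b) is a sequence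
   eta_k = a, eta_{k+1}, ..., eta_l = b with (j+1,eta_{j+1}) <= (j,eta_j). *)
Inductive chain {A : Z -> Type} (le : sigT A -> sigT A -> Prop)
  : forall k : Z, A k -> forall l : Z, A l -> Prop :=
| chain_refl : forall k (a : A k), chain le k a k a
| chain_step : forall k (a : A k) l (b : A l) (c : A (l + 1)%Z),
    chain le k a l b -> le (existT A (l + 1)%Z c) (existT A l b) ->
    chain le k a (l + 1)%Z c.

Definition dyadic_partial_order {X : Type} (d : X -> X -> R) {A : Z -> Type}
  (x : forall k : Z, A k -> X) (delta c0 C0 : R)
  (le : sigT A -> sigT A -> Prop) : Prop :=
  (forall p, le p p) /\
  (forall p q, le p q -> le q p -> p = q) /\
  (forall p q r, le p q -> le q r -> le p r) /\
  (forall k (b : A (k + 1)%Z), exists a : A k,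
      le (existT A (k + 1)%Z b) (existT A k a) /\
      forall a' : A k, le (existT A (k + 1)%Z b) (existT A k a') -> a' = a) /\
  (forall l (b : A l) k (a : A k), (l <= k)%Z ->
      (le (existT A l b) (existT A k a) <-> existT A l b = existT A k a)) /\
  (forall l (b : A l) k (a : A k), (l > k)%Z ->
      (le (existT A l b) (existT A k a) <-> chain le k a l b)) /\
  (forall k (b : A (k + 1)%Z) (a : A k),
      (d (x (k + 1)%Z b) (x k a) < / 2 * c0 * powerRZ delta k ->
         le (existT A (k + 1)%Z b) (existT A k a)) /\
      (le (existT A (k + 1)%Z b) (existT A k a) ->
         d (x (k + 1)%Z b) (x k a) < C0 * powerRZ delta k)).

(* Main.v *)
Require Import Defs.
From Stdlib Require Import Reals ZArith List Lra Lia Classical.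
Open Scope R_scope.

Lemma pig_list {X : Type} (L : list X) (P : nat -> X -> Prop) :
  (forall n, exists c, In c L /\ P n c) ->
  exists c, In c L /\ forall N, exists n, (n >= N)%nat /\ P n c.
Proof.
  revert P; induction L as [|c L IH]; intros P HP.
  - destruct (HP 0%nat) as [c [[] _]].
  - destruct (classic (forall N, exists n, (n >= N)%nat /\ P n c)) as [H|H].
    + exists c; split; [left; auto | exact H].
    + apply not_all_ex_not in H as [N0 HN0].
      destruct (IH (fun n c' => P (n + N0)%nat c')) as [c' [Hin Hc']].
      * intros n. destruct (HP (n + N0)%nat) as [c'' [[<-|Hin] Hp]].
        -- exfalso; apply HN0; exists (n+N0)%nat; split; [lia|auto].
        -- exists c''; auto.
      * exists c'; split; [right; auto|].
        intros N. destruct (Hc' N) as [n [Hn Hp]]. exists (n+N0)%nat; split; [lia|auto].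
Qed.

Lemma cover_list {X : Type} (d : X -> X -> R) (Hd : geom_doubling d) (rho : R) :
  forall cs : list X, exists cs', forall c z, In c cs -> d c z < rho ->
     exists c', In c' cs' /\ d c' z < rho / 2.
Proof.
  destruct Hd as [A1 HA].
  induction cs as [|c cs IH].
  - exists nil; intros c z [].
  - destruct IH as [cs' Hcs']. destruct (HA c rho) as [l [_ Hl]].
    exists (l ++ cs'). intros c0 z [<-|Hin] Hz.
    + destruct (Hl z Hz) as [c' [Hc' Hb]]. exists c'; split; [apply in_or_app; auto|exact Hb].
    + destruct (Hcs' c0 z Hin Hz) as [c' [Hc' Hb]]. exists c'; split; [apply in_or_app; auto|exact Hb].
Qed.

Lemma cover_n {X : Type} (d : X -> X -> R) (Hd : geom_doubling d) (y : X) (r : R) :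
  forall n : nat, exists cs : list X, forall z, d y z < r ->
     exists c, In c cs /\ d c z < r * (/2) ^ n.
Proof.
  induction n as [|n IH].
  - exists (y :: nil). intros z Hz. exists y; split; [left; auto|simpl; lra].
  - destruct IH as [cs Hcs]. destruct (cover_list d Hd (r * (/2)^n) cs) as [cs' Hcs'].
    exists cs'. intros z Hz. destruct (Hcs z Hz) as [c [Hc Hb]].
    destruct (Hcs' c z Hc Hb) as [c' [Hc' Hb']]. exists c'; split; auto.
    replace (r * (/2) ^ S n) with (r * (/2)^n / 2) by (simpl; field). exact Hb'.
Qed.

Lemma pow_le1 (t : R) (n : nat) : 0 <= t -> t <= 1 -> t ^ n <= 1.
Proof.
  intros H0 H1; induction n; simpl; [lra|].
  assert (0 <= t ^ n) by (apply pow_le; auto). nra.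
Qed.

Theorem lemma3p5
  (X : Type) (d : X -> X -> R) (Hmet : is_metric d) (Hdbl : geom_doubling d)
  (E : X -> Prop) (m : Z) (b0 B0 delta : R)
  (Hb0 : 0 < b0) (Hb0B0 : b0 <= B0) (Hdel0 : 0 < delta) (Hdel1 : delta < 1)
  (H12 : 12 * B0 * delta <= b0)
  (A : Z -> Type) (x : forall k : Z, A k -> X)
  (* (1) *)
  (H1sep : forall k (a b : A k), a <> b -> d (x k a) (x k b) >= b0 * powerRZ delta k)
  (H1cov : forall k (y : X), exists a : A k, d y (x k a) < B0 * powerRZ delta k)
  (* (2) for F = E and F = X \ E *)
  (H2E : forall k, (k >= m)%Z -> forall y, E y ->
      exists a : A k, E (x k a) /\ d y (x k a) < B0 * powerRZ delta k)
  (H2Ec : forall k, (k >= m)%Z -> forall y, ~ E y ->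
      exists a : A k, ~ E (x k a) /\ d y (x k a) < B0 * powerRZ delta k)
  (* (3) for F = E and F = X \ E : dist(x^k_a, X \ F) >= b0 delta^k *)
  (H3E : forall k, (k >= m)%Z -> forall a : A k, E (x k a) ->
      forall y, ~ E y -> d (x k a) y >= b0 * powerRZ delta k)
  (H3Ec : forall k, (k >= m)%Z -> forall a : A k, ~ E (x k a) ->
      forall y, ~ ~ E y -> d (x k a) y >= b0 * powerRZ delta k)
  (* (4) *)
  (a0 : A m) (Ha0 : E (x m a0)) (Ha0u : forall a : A m, E (x m a) -> a = a0)
  (le : sigT A -> sigT A -> Prop)
  (Hle : dyadic_partial_order d x delta b0 B0 le)
  (Hsame : forall k (a : A k) l (b : A l), (k >= m)%Z ->
      le (existT A l b) (existT A k a) -> (E (x l b) <-> E (x k a))) :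
  let Qbar := fun (a : A m) =>
    closure d (fun y => exists l (b : A l), le (existT A l b) (existT A m a) /\ y = x l b) in
  let Qtilde := fun y => forall g : A m, g <> a0 -> ~ Qbar g y in
  (forall y, Qtilde y -> E y) /\ (forall y, E y -> Qbar a0 y).
Proof.
  destruct Hmet as [Hd0 [Hdeq [Hsym Htri]]].
  destruct Hle as [Hrefl [_ [Htrans [Ha [_ [_ Hdd]]]]]].
  set (S := fun k => B0 * powerRZ delta k / (1 - delta)).
  assert (Hanc : forall k, (m <= k)%Z -> forall a : A k, exists g : A m,
     le (existT A k a) (existT A m g) /\ d (x k a) (x m g) <= S m - S k).
  { intros k Hk. pattern k. revert k Hk. apply Z.le_ind.
    - intros u v ->; reflexivity.
    - intros a. exists a; split; [apply Hrefl|]. rewrite (proj2 (Hdeq _ _) eq_refl). lra.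
    - intros k Hk IH a. unfold Z.succ in *. destruct (Ha k a) as [p [Hp _]].
      destruct (IH p) as [g [Hg Hgd]]. exists g; split.
      + eapply Htrans; eauto.
      + pose proof (proj2 (Hdd k a p) Hp) as Hdp.
        pose proof (Htri (x (k+1)%Z a) (x k p) (x m g)).
        assert (S k - S (k+1)%Z = B0 * powerRZ delta k).
        { unfold S. rewrite powerRZ_add by lra. simpl. field. lra. }
        lra. }
  assert (Hpm : 0 < powerRZ delta m) by (apply powerRZ_lt; lra).
  assert (HB0 : 0 < B0) by lra.
  assert (Hpow : forall n : nat, powerRZ delta (m + Z.of_nat n) = powerRZ delta m * delta ^ n).
  { intros n. rewrite powerRZ_add by lra. rewrite pow_powerRZ. reflexivity. }
  assert (Hsmall : forall eps, 0 < eps -> exists N : nat, forall n, (n >= N)%nat ->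
      B0 * powerRZ delta (m + Z.of_nat n) < eps).
  { intros eps He. destruct (pow_lt_1_zero delta) with (y := eps / (B0 * powerRZ delta m))
      as [N HN].
    - rewrite Rabs_right; lra.
    - apply Rdiv_lt_0_compat; [lra| apply Rmult_lt_0_compat; lra].
    - exists N. intros n Hn. specialize (HN n Hn). rewrite Rabs_right in HN
        by (apply Rle_ge, pow_le; lra).
      rewrite Hpow.
      apply (Rmult_lt_compat_l (B0 * powerRZ delta m)) in HN; [|apply Rmult_lt_0_compat; lra].
      replace (B0 * powerRZ delta m * (eps / (B0 * powerRZ delta m))) with eps in HN
        by (field; split; lra).
      lra. }
  assert (HSk : forall k, 0 <= S k).
  { intros k. unfold S. apply Rmult_le_pos; [apply Rmult_le_pos; [lra|apply powerRZ_le; lra]|].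
    apply Rlt_le, Rinv_0_lt_compat; lra. }
  intros Qbar Qtilde. split.
  - intros y HQ. apply NNPP; intros HnE.
    set (R0 := B0 * powerRZ delta m + S m).
    set (rho := b0 * powerRZ delta m / 2).
    destruct (pow_lt_1_zero (/2)) with (y := rho / R0) as [N HN].
    { rewrite Rabs_right; lra. }
    { unfold rho, R0. apply Rdiv_lt_0_compat; [|pose proof (HSk m); nra].
      apply Rmult_lt_0_compat; [|lra]. nra. }
    specialize (HN N (Nat.le_refl _)). rewrite Rabs_right in HN by (apply Rle_ge, pow_le; lra).
    assert (HR0 : 0 < R0) by (unfold R0; pose proof (HSk m); nra).
    destruct (cover_n d Hdbl y R0 N) as [cs Hcs].
    assert (Hrho : R0 * (/2)^N < rho).
    { apply (Rmult_lt_compat_l R0) in HN; [|lra].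
      replace (R0 * (rho / R0)) with rho in HN by (field; lra). lra. }
    set (P := fun (n : nat) c => exists g : A m, g <> a0 /\ d c (x m g) < rho /\
       exists a : A (m + Z.of_nat n)%Z, le (existT A _ a) (existT A m g) /\
         d y (x _ a) < B0 * powerRZ delta (m + Z.of_nat n)%Z).
    destruct (pig_list cs P) as [c [Hc Hinf]].
    { intros n. destruct (H2Ec (m + Z.of_nat n)%Z ltac:(lia) y HnE) as [a [HaE Had]].
      destruct (Hanc (m + Z.of_nat n)%Z ltac:(lia) a) as [g [Hg Hgd]].
      assert (Hgy : d y (x m g) < R0).
      { pose proof (Htri y (x _ a) (x m g)).
        pose proof (HSk (m + Z.of_nat n)%Z).
        assert (delta ^ n <= 1) by (apply pow_le1; lra).
        rewrite Hpow in Had.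
        assert (B0 * (powerRZ delta m * delta ^ n) <= B0 * powerRZ delta m).
        { apply Rmult_le_compat_l; [lra|]. rewrite <- (Rmult_1_r (powerRZ delta m)) at 2.
          apply Rmult_le_compat_l; lra. }
        unfold R0. lra. }
      destruct (Hcs _ Hgy) as [c [Hc Hcd]]. exists c; split; auto.
      exists g; split; [|split; [lra|exists a; auto]].
      intros ->. apply HaE. apply (Hsame m a0 _ a); [lia|auto|auto]. }
    destruct (Hinf 0%nat) as [n0 [_ [g0 [Hg0 [Hcg0 _]]]]].
    apply (HQ g0 Hg0). intros eps He.
    destruct (Hsmall eps He) as [N' HN'].
    destruct (Hinf N') as [n [Hn [g [Hg [Hcg [a [Hla Hda]]]]]]].
    assert (g = g0).
    { apply NNPP; intros Hne. pose proof (H1sep m g g0 Hne).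
      pose proof (Htri (x m g) c (x m g0)). rewrite (Hsym (x m g) c) in H0.
      unfold rho in *. lra. }
    subst g. exists (x _ a). split; [exists (m + Z.of_nat n)%Z, a; auto|].
    specialize (HN' n Hn). lra.
  - intros y Hy eps He. destruct (Hsmall eps He) as [N HN].
    destruct (H2E (m + Z.of_nat N)%Z ltac:(lia) y Hy) as [a [HaE Had]].
    destruct (Hanc (m + Z.of_nat N)%Z ltac:(lia) a) as [g [Hg _]].
    assert (g = a0).
    { apply Ha0u. apply (Hsame m g _ a); [lia|auto|auto]. }
    subst g. exists (x _ a). split; [exists (m + Z.of_nat N)%Z, a; auto|].
    specialize (HN N (Nat.le_refl _)). lra.
Qed.
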